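(* Let $(X,\mu)$ be a measure space and $\mathcal{E}$ a finite collection of measurable sets with $0<\mu(R)<\infty$ for all $R\in\mathcal{E}$. For each $f\in L^1(X)$ there exists a sparse subfamily $\mathcal{S}\subseteq\mathcal{E}$ such that $$\mathcal{M}_\mathcal{E}f\le\mathcal{P}^{\frac12}_\mathcal{E}(\mathcal{M}_\mathcal{S}f)\quad\text{pointwise}.$$
   Context: $\langle f\rangle_R=\frac1{\mu(R)}\int_Rf\,d\mu$. For a family $\mathcal{F}$ of such sets, $\mathcal{M}_\mathcal{F}f=\sup_{R\in\mathcal{F}}|\langle f\rangle_R|\mathbf{1}_R$. $\mathsf{P}^r_R(g):=\inf\{\lambda\in\mathbb{R}:\mu(\{x\in R:g(x)>\lambda\})\le r\mu(R)\}$ and $\mathcal{P}^r_\mathcal{E}g:=\sup_{R\in\mathcal{E}}\mathsf{P}^r_R(g)\mathbf{1}_R$. A subfamily $\mathcal{S}$ is sparse if there exist pairwise disjoint sets $E_R\subseteq R$, $R\in\mathcal{S}$, with $\mu(E_R)\ge\frac12\mu(R)$. *)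

(* Defs.v *)
From HB Require Import structures.
From mathcomp Require Import all_boot all_order all_algebra.
From mathcomp Require Import all_classical all_reals all_analysis.
Set Implicit Arguments. Unset Strict Implicit. Unset Printing Implicit Defensive.
Import Order.TTheory GRing.Theory Num.Theory.
Local Open Scope classical_set_scope.
Local Open Scope ring_scope.

Section Defs.
Context (d : measure_display) (T : measurableType d) (R : realType)
        (mu : {measure set T -> \bar R}).

Definition avg (Q : set T) (f : T -> R) : R :=
  (fine (mu Q))^-1 * fine (\int[mu]_(x in Q) (f x)%:E).

Definition maxop (F : set (set T)) (f : T -> R) (x : T) : \bar R :=
  ereal_sup [set (`|avg Q f| * \1_Q x)%:E | Q in F].

Definition Pquant (r : R) (Q : set T) (g : T -> \bar R) : \bar R :=
  ereal_inf [set lam%:E | lam in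
    [set lam : R | (mu [set x | Q x /\ (lam%:E < g x)%E] <= r%:E * mu Q)%E]].

Definition Pop (r : R) (E : set (set T)) (g : T -> \bar R) (x : T) : \bar R :=
  ereal_sup [set (Pquant r Q g * (\1_Q x)%:E)%E | Q in E].

Definition sparse (S : set (set T)) : Prop :=
  exists EQ : set T -> set T,
    (forall Q, S Q -> [/\ measurable (EQ Q), EQ Q `<=` Q &
                        ((2^-1)%:E * mu Q <= mu (EQ Q))%E]) /\
    (forall Q1 Q2, S Q1 -> S Q2 -> Q1 <> Q2 -> EQ Q1 `&` EQ Q2 = set0).

End Defs.

(* Main.v *)
Set Warnings "-all".
Require Import Defs.
From HB Require Import structures.
From mathcomp Require Import all_boot all_order all_algebra.
From mathcomp Require Import all_classical all_reals all_analysis.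
From mathcomp Require Import lra.
Import Order.TTheory GRing.Theory Num.Theory.
Local Open Scope classical_set_scope.
Local Open Scope ring_scope.

Section S.
Context (d : measure_display) (T : measurableType d) (R : realType)
        (mu : {measure set T -> \bar R}) (f : T -> R).

Let a (Q : set T) : R := `|avg mu Q f|.
Let G (S : set (set T)) (c : R) : set T :=
  \bigcup_(P in [set P | S P /\ c <= a P]) P.
Let good (Q : set T) := [/\ measurable Q, (0 < mu Q)%E & (mu Q < +oo)%E].

Lemma const_meas (b : bool) : measurable [set _ : T | b].
Proof.
case: b; last by rewrite (_ : [set _ | false] = set0) //; apply/seteqP; split.
by rewrite (_ : [set _ | true] = setT) //; apply/seteqP; split.
Qed.

Lemma G_meas (s : seq (set T)) S c : S `<=` [set` s] ->
  (forall Q, Q \in s -> good Q) -> measurable (G S c).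
Proof.
move=> Ss gs; apply: fin_bigcup_measurable.
  by apply: (sub_finite_set _ (finite_seq s)) => P [/Ss].
by move=> P [/Ss /gs []].
Qed.

Lemma min_exists (s : seq (set T)) : s != [::] ->
  exists2 R0, R0 \in s & forall Q, Q \in s -> a R0 <= a Q.
Proof.
elim: s => // Q s IH _.
case: (eqVneq s [::]) => [->|ne].
  by exists Q; rewrite ?mem_head // => Q'; rewrite inE => /eqP ->.
have [R1 R1s R1m] := IH ne.
case: (leP (a Q) (a R1)) => h.
  exists Q; first exact: mem_head.
  move=> Q'; rewrite inE => /orP[/eqP ->//|/R1m]; exact: le_trans.
exists R1; first by rewrite inE R1s orbT.
move=> Q'; rewrite inE => /orP[/eqP ->|/R1m//]; exact: ltW.
Qed.

Lemma half_lt (x : \bar R) : (0 < x)%E -> (x < +oo)%E -> ((2^-1)%:E * x < x)%E.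
Proof.
move=> x0 xoo; have xf : x \is a fin_num by rewrite ge0_fin_numE ?ltW.
rewrite -(fineK xf) -EFinM lte_fin; have := x0; rewrite -(fineK xf) lte_fin.
move=> h; lra.
Qed.

Lemma greedy n : forall s : seq (set T), (size s <= n)%N ->
  (forall Q, Q \in s -> good Q) ->
  exists S, [/\ S `<=` [set` s], sparse mu S &
    forall Q, Q \in s -> ((2^-1)%:E * mu Q < mu (Q `&` G S (a Q)))%E].
Proof.
elim: n => [|n IH] s.
  rewrite leqn0 => /nilP -> _; exists set0; split => //.
  by exists id; split => //.
move=> sz gs.
case: (eqVneq s [::]) => [->|ne].
  by exists set0; split => //; exists id; split.
have [R0 R0s R0m] := min_exists s ne.
set s' := [seq Q <- s | Q != R0].
have sz' : (size s' <= n)%N.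
  rewrite size_filter -ltnS (leq_trans _ sz) // -[X in (_ < X)%N](count_predC (pred1 R0)).
  rewrite -addn1 addnC leq_add2r -has_count has_pred1 //.
have gs' : forall Q, Q \in s' -> good Q by move=> Q; rewrite mem_filter => /andP[_ /gs].
have [S' [S's [EQ' [EQ'p EQ'd]] S'G]] := IH s' sz' gs'.
have [mR0 R0pos R0fin] := gs _ R0s.
set U := \bigcup_(Q in S') Q.
have mU : measurable U.
  apply: fin_bigcup_measurable; first exact: (sub_finite_set S's (finite_seq s')).
  by move=> Q /S's /gs' [].
have S'sub : forall Q, S' Q -> Q \in s by move=> Q /S's; rewrite /= mem_filter => /andP[].
have S'neq : forall Q, S' Q -> Q <> R0 by move=> Q /S's; rewrite /= mem_filter => /andP[/eqP].
case: (ltP ((2^-1)%:E * mu R0)%E (mu (R0 `&` U))) => hU.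
- exists S'; split.
  + by move=> Q /S'sub.
  + by exists EQ'.
  move=> Q Qs; case: (eqVneq Q R0) => [->|QR0]; last first.
    by apply: S'G; rewrite mem_filter QR0.
  apply: (lt_le_trans hU); apply: le_measure; rewrite ?inE.
  + exact: measurableI.
  + by apply: measurableI => //; apply: (G_meas s) => // Q /S'sub.
  apply: setIS => x [P SP Px]; exists P => //; split => //; apply: R0m; exact: S'sub.
- exists (S' `|` [set R0]); split.
  + by move=> Q [/S'sub|->].
  + exists (fun Q => if Q == R0 then R0 `\` U else EQ' Q); split.
    * move=> Q [SQ|->]; last first.
        rewrite eqxx; split; [exact: measurableD | by move=> x [] |].
        rewrite measureD //.
        have uf : mu (R0 `&` U) \is a fin_num.
          rewrite ge0_fin_numE // (le_lt_trans _ R0fin) //.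
          by apply: le_measure; rewrite ?inE //; apply: measurableI.
        have rf : mu R0 \is a fin_num by rewrite ge0_fin_numE // ltW.
        have -> : (mu R0 - mu (R0 `&` U) = (fine (mu R0) - fine (mu (R0 `&` U)))%:E)%E by rewrite EFinB !fineK.
        move: hU; rewrite -(fineK uf) -(fineK rf) -EFinM !lee_fin => h; lra.
      have /eqP/negbTE -> := S'neq _ SQ; exact: EQ'p.
    * move=> Q1 Q2 [S1|->] [S2|->] ne12.
      - have /eqP/negbTE -> := S'neq _ S1; have /eqP/negbTE -> := S'neq _ S2.
        exact: EQ'd.
      - have /eqP/negbTE -> := S'neq _ S1; rewrite eqxx.
        apply/seteqP; split => x // [h1 [_ h2]]; apply: h2; exists Q1 => //.
        by have [_ + _] := EQ'p _ S1; apply.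
      - have /eqP/negbTE -> := S'neq _ S2; rewrite eqxx.
        apply/seteqP; split => x // [[_ h2] h1]; apply: h2; exists Q2 => //.
        by have [_ + _] := EQ'p _ S2; apply.
      - by [].
  move=> Q Qs; case: (eqVneq Q R0) => [->|QR0].
    rewrite (_ : R0 `&` _ = R0); first exact: half_lt.
    by apply/seteqP; split => [x []//|x R0x]; split => //; exists R0 => //; split => //; right.
  apply: (lt_le_trans (S'G Q _)); first by rewrite mem_filter QR0.
  apply: le_measure; rewrite ?inE.
  + by apply: measurableI; [have [] := gs _ Qs | apply: (G_meas s') => // P /S's].
  + apply: measurableI; first by have [] := gs _ Qs.
    by apply: (G_meas s) => // P [/S'sub|->].
  by apply: setIS => x [P [SP aP] Px]; exists P => //; split => //; left.
Qed.

End S.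


Lemma lt_ind_meas d (T : measurableType d) (R : realType) (P : set T) (c lam : R) :
  measurable P -> measurable [set y | lam < c * \1_P y].
Proof.
move=> mP.
rewrite (_ : [set y | _] = (P `&` [set _ | lam < c]) `|` (~` P `&` [set _ | lam < 0])).
  apply: measurableU; apply: measurableI; [exact mP | exact (const_meas d T (lam < c)) | exact: measurableC | exact (const_meas d T (lam < 0))].
apply/seteqP; split => y /=.
  by rewrite indicE; case: (pselect (P y)) => Py;
    [rewrite mem_set // mulr1; left | rewrite memNset // mulr0; right].
by case => [[Py h]|[Py h]]; rewrite indicE; [rewrite mem_set // mulr1 | rewrite memNset // mulr0].
Qed.

Theorem theorem1p5 (d : measure_display) (T : measurableType d) (R : realType)
  (mu : {measure set T -> \bar R}) (E : set (set T)) :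
  finite_set E ->
  (forall Q, E Q -> [/\ measurable Q, (0 < mu Q)%E & (mu Q < +oo)%E]) ->
  forall f : T -> R, mu.-integrable setT (EFin \o f) ->
  exists S : set (set T), S `<=` E /\ sparse mu S /\
    forall x : T, (maxop mu E f x <= Pop mu (2^-1) E (maxop mu S f) x)%E.
Proof.
move=> finE gE f _.
have [s Es] := (finite_seqP E).1 finE.
have gs : forall Q, Q \in s -> [/\ measurable Q, (0 < mu Q)%E & (mu Q < +oo)%E].
  by move=> Q Qs; apply: gE; rewrite Es.
have [S [Ss spS HS]] := @greedy _ _ _ mu f (size s) s (leqnn (size s)) gs.
exists S; split; first by rewrite Es.
split => // x.
set g := maxop mu S f.
have key : forall Q, E Q -> (`|avg mu Q f|%:E <= Pquant mu 2^-1 Q g)%E.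
  move=> Q EQ; have Qs : Q \in s by move: EQ; rewrite Es.
  have [mQ _ _] := gE Q EQ.
  apply: le_ereal_inf_tmp => _ [lam Hlam <-].
  rewrite lee_fin leNgt; apply/negP => hlt.
  suff h : (mu (Q `&` \bigcup_(P in [set P | S P /\ (`|avg mu Q f| <= `|avg mu P f|)%R]) P)
            <= mu [set y | Q y /\ (lam%:E < g y)%E])%E.
    by have := lt_le_trans (HS Q Qs) (le_trans h Hlam); rewrite ltxx.
  apply: le_measure; rewrite ?inE.
  - apply: measurableI => //; apply: fin_bigcup_measurable; last by move=> P [/Ss /gs []].
    by apply: (sub_finite_set _ (finite_seq s)) => P [/Ss].
  - rewrite (_ : [set y | _] = Q `&` \bigcup_(P in S)
                  [set y | lam < `|avg mu P f| * \1_P y]).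
      apply: measurableI => //; apply: fin_bigcup_measurable.
        exact: (sub_finite_set Ss (finite_seq s)).
      by move=> P /Ss /gs [mP _ _]; apply: lt_ind_meas.
    apply/seteqP; split => y /= [Qy h]; split => //.
      have [_ [P SP <-] lt] := ereal_sup_gt h.
      by exists P => //=; rewrite -lte_fin.
    case: h => P SP /= h; apply: (lt_le_trans _ (ereal_sup_ubound _)).
      exact: (h : (lam%:E < _%:E)%E).
    by exists P.
  move=> y [Qy [P [SP aP] Py]]; split => //.
  apply: (lt_le_trans _ (ereal_sup_ubound _)); last by exists P.
  by rewrite indicE mem_set // mulr1 lte_fin (lt_le_trans hlt aP).
apply: ge_ereal_sup => _ [Q EQ <-].
case: (pselect (Q x)) => Qx.
  rewrite indicE mem_set // mulr1; apply: (le_trans (key Q EQ)).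
  by apply: ereal_sup_ubound; exists Q => //; rewrite indicE mem_set // mule1.
rewrite indicE memNset // mulr0; apply: (le_trans _ (ereal_sup_ubound _)).
  2: by exists Q.
by rewrite indicE memNset // mule0.
Qed.
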